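(* Let $g \ge 3$ be an integer and let $\mathcal{S}_{4,g}$ be the set of numerical semigroups of multiplicity $4$ and genus $g$. If $g=3$ then $\#\mathcal{S}_{4,g}=1$. If $g \ge 4$ then $\#\mathcal{S}_{4,g} = -g + \frac{5}{2}\lfloor \frac{g}{4}\rfloor + \lfloor \frac{g}{2}\rfloor + \frac12\lfloor \frac{g+5}{6}\rfloor + g\lfloor \frac{g+5}{6}\rfloor - \lfloor \frac{g+5}{6}\rfloor\lfloor \frac{g}{2}\rfloor - \frac32\lfloor \frac{g+5}{6}\rfloor^2 - g\lfloor \frac{g}{4}\rfloor + \frac32\lfloor \frac{g}{4}\rfloor^2 + \lfloor \frac{g}{4}\rfloor\lfloor \frac{g}{2}\rfloor - \frac12\lfloor \frac{g+2}{6}\rfloor + \lfloor \frac{g+2}{6}\rfloor\lfloor \frac{g}{2}\rfloor - \frac32\lfloor \frac{g+2}{6}\rfloor^2 + \frac12\lfloor \frac{g+2}{4}\rfloor + \frac32\lfloor \frac{g+2}{4}\rfloor^2 - \lfloor \frac{g+2}{4}\rfloor\lfloor \frac{g}{2}\rfloor + \lfloor \frac{g+1}{2}\rfloor\lfloor \frac{g}{2}\rfloor - \lfloor \frac{g+1}{2}\rfloor\lceil \frac{2g-3}{8}\rceil + \lfloor \frac{g+1}{2}\rfloor - \lceil \frac{2g-7}{8}\rceil\lfloor \frac{g}{2}\rfloor + \lceil \frac{2g-7}{8}\rceil\lceil \frac{2g-3}{8}\rceil - \lceil \frac{2g-7}{8}\rceil$.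
   Context: A numerical semigroup is a subset $S \subseteq \mathbb{N}$ containing $0$, closed under addition, with $\mathbb{N}\setminus S$ finite. Its multiplicity is $\min(S\setminus\{0\})$ and its genus is $\#(\mathbb{N}\setminus S)$. *)

(* Defs.v *)
From mathcomp Require Import all_boot all_order all_algebra.
Set Implicit Arguments. Unset Strict Implicit. Unset Printing Implicit Defensive.
Import Order.TTheory GRing.Theory Num.Theory.

Definition numerical_semigroup (S : nat -> bool) : Prop :=
  [/\ S 0, (forall a b, S a -> S b -> S (a + b)) & exists N, forall n, N <= n -> S n].

Definition multiplicity (S : nat -> bool) (m : nat) : Prop :=
  [/\ 0 < m, S m & forall k, 0 < k < m -> ~~ S k].

Definition genus (S : nat -> bool) (g : nat) : Prop :=
  exists s : seq nat, [/\ uniq s, (forall n, (n \in s) = ~~ S n) & size s = g].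

(* A (extensional) property P of subsets of N has exactly N elements:
   there is a bijection from 'I_N onto {S | P S}, up to extensional equality. *)
Definition has_card (P : (nat -> bool) -> Prop) (N : nat) : Prop :=
  exists f : 'I_N -> (nat -> bool),
    [/\ forall i, P (f i),
        forall i j, f i =1 f j -> i = j
      & forall S, P S -> exists i, f i =1 S].

Definition S4g (g : nat) (S : nat -> bool) : Prop :=
  [/\ numerical_semigroup S, multiplicity S 4 & genus S g].

(* Main.v *)
Require Import Defs.
From mathcomp Require Import all_boot all_order all_algebra.
From mathcomp Require Import zify ring lra.
Import Order.TTheory GRing.Theory Num.Theory.

Definition valid (g x y : nat) : bool :=
  [&& 0 < x, 0 < y, x + y < g, y <= 2*x &
      [&& g <= 2*x + 2*y, 3*y + 2*x <= 2*g + 1 & 2*x <= g + 1]].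
Definition cnt g y := count (fun x => valid g x y) (iota 0 g.+1).
Definition C g := \sum_(y < g.+1) cnt g y.

Lemma count_iota_int l h n :
  count (fun x => (l <= x) && (x <= h)) (iota 0 n) = minn h.+1 n - l.
Proof.
elim: n => [|n IH]; first by rewrite /= minn0.
rewrite -addn1 iotaD count_cat IH /= add0n addn0.
case: (leqP l n) => Hl; case: (leqP n h) => Hh /=; lia.
Qed.

Lemma valid_A g x y : 0 < y -> g <= 3*y -> 4 <= g ->
  valid g x y = ((y+1)%/2 <= x) && (x <= (2*g+1-3*y)%/2).
Proof.
move=> Hy Hg Hg4; apply/idP/idP.
  by move=> /and5P [H1 H2 H3 H4 /and3P [H5 H6 H7]]; apply/andP; split; lia.
move=> /andP [H1 H2]; apply/and5P; split; try lia.
all: try (apply/and3P; split; lia).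
Qed.

Lemma valid_B g x y : 0 < y -> 3*y < g -> 4 <= g ->
  valid g x y = ((g-2*y+1)%/2 <= x) && (x <= (g+1)%/2).
Proof.
move=> Hy Hg Hg4; apply/idP/idP.
  by move=> /and5P [H1 H2 H3 H4 /and3P [H5 H6 H7]]; apply/andP; split; lia.
move=> /andP [H1 H2]; apply/and5P; split; try lia.
all: try (apply/and3P; split; lia).
Qed.

Lemma cnt_A g y : 0 < y -> g <= 3*y -> 4 <= g ->
  cnt g y = (2*g+1-3*y)%/2 + 1 - (y+1)%/2.
Proof.
move=> Hy Hg Hg4; rewrite /cnt (eq_count (fun x => valid_A g x y Hy Hg Hg4)) count_iota_int.
rewrite (minn_idPl _) ?addn1 //; lia.
Qed.

Lemma cnt_B g y : 0 < y -> 3*y < g -> 4 <= g ->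
  cnt g y = (g+1)%/2 + 1 - (g-2*y+1)%/2.
Proof.
move=> Hy Hg Hg4; rewrite /cnt (eq_count (fun x => valid_B g x y Hy Hg Hg4)) count_iota_int.
rewrite (minn_idPl _) ?addn1 //; lia.
Qed.

Lemma cnt0 g : cnt g 0 = 0.
Proof. by rewrite /cnt (eq_count (a2 := pred0)) ?count_pred0 // => x; rewrite /valid /= andbF. Qed.


Definition L1 g := 2*(g%/6) + nth 0 [:: 1;1;1;2;2;3] (g %% 6).
Definition L2 g := 2*(g%/6) + nth 0 [:: 1;1;2;2;2;2] (g %% 6).
Definition ind (l h y : nat) : nat := (l <= y) && (y <= h).

Lemma pointwise g y : 4 <= g -> y <= g ->
  cnt (g+2) y + ind (g%/2+1) (g%/2+1 - g%%2) y =
  cnt g y + ind (L1 g) (g%/2+1) y + ind (L2 g) (g%/2+1) y.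
Proof.
move=> Hg Hy.
rewrite /ind /L1 /L2.
have := divn_eq g 6; have := ltn_pmod g (isT : 0 < 6).
case: (g %% 6) => [|[|[|[|[|[|r]]]]]] //= _ E.
all: case: y Hy => [|y] Hy; [rewrite !cnt0; lia|].
all: have Hy1 : 0 < y.+1 by [].
all: have Hg2 : 4 <= g + 2 by lia.
all: case: (leqP (g+2) (3*y.+1)) => H1;
  [ (have H2 : g <= 3 * y.+1 by lia);
    rewrite (cnt_A (g+2) y.+1 Hy1 H1 Hg2) (cnt_A g y.+1 Hy1 H2 Hg)
  | case: (leqP g (3*y.+1)) => H2;
    [ rewrite (cnt_B (g+2) y.+1 Hy1 H1 Hg2) (cnt_A g y.+1 Hy1 H2 Hg)
    | rewrite (cnt_B (g+2) y.+1 Hy1 H1 Hg2) (cnt_B g y.+1 Hy1 H2 Hg)]].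
all: repeat (case: leqP => ?); lia.
Qed.


Lemma sum_ind l h n : \sum_(y < n) ind l h y = minn h.+1 n - l.
Proof.
elim: n => [|n IH]; first by rewrite big_ord0 minn0.
rewrite big_ord_recr /= IH /ind.
case: (leqP l n) => Hl; case: (leqP n h) => Hh /=; lia.
Qed.

Lemma C_rec g : 4 <= g -> C (g+2) = C g + (g+5)%/3.
Proof.
move=> Hg.
have E1 : C (g+2) = \sum_(y < g.+1) cnt (g+2) y.
  rewrite /C addn2 big_ord_recr big_ord_recr /=.
  have Z : forall y, g < y -> cnt g.+2 y = 0.
    move=> y Hy; rewrite /cnt (eq_count (a2 := pred0)) ?count_pred0 // => x.
    rewrite /valid; apply/negbTE; apply/negP => H; lia.
  by rewrite !Z // !addn0.
have E2 : \sum_(y < g.+1) (cnt (g+2) y + ind (g%/2+1) (g%/2+1 - g%%2) y) =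
          \sum_(y < g.+1) (cnt g y + ind (L1 g) (g%/2+1) y + ind (L2 g) (g%/2+1) y).
  apply: eq_bigr => y _; apply: pointwise => //; exact: (ltn_ord y).
rewrite big_split [in RHS]big_split [in RHS]big_split (sum_ind (g%/2+1)) (sum_ind (L1 g)) (sum_ind (L2 g)) -E1 in E2.
move: E2; rewrite -/(C g) /L1 /L2.
have := divn_eq g 6; have := ltn_pmod g (isT : 0 < 6).
case: (g %% 6) => [|[|[|[|[|[|r]]]]]] //= _ E; lia.
Qed.


Lemma C4 : C 4 = 3. Proof. by rewrite /C !big_ord_recr big_ord0. Qed.
Lemma C5 : C 5 = 4. Proof. by rewrite /C !big_ord_recr big_ord0. Qed.
Lemma C3 : C 3 = 1. Proof. by rewrite /C !big_ord_recr big_ord0. Qed.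

Lemma Q_rec g : ((g+2)*(g+2) + 6*(g+2))%/12 = (g*g+6*g)%/12 + (g+5)%/3.
Proof.
have := divn_eq g 12; have := ltn_pmod g (isT : 0 < 12).
set q := g %/ 12.
case: (g %% 12) => [|[|[|[|[|[|[|[|[|[|[|[|r]]]]]]]]]]]] //= _ E;
rewrite E; set Z := q * 12; nia.
Qed.

Lemma C_closed g : 4 <= g -> C g = (g*g+6*g)%/12.
Proof.
move=> Hg.
suff H : forall n, C (n+4) = ((n+4)*(n+4)+6*(n+4))%/12 /\
                   C (n+5) = ((n+5)*(n+5)+6*(n+5))%/12.
  by have [] := H (g - 4); rewrite subnK.
elim=> [|n [IH1 IH2]]; first by rewrite /= C4 C5.
split; first by rewrite (_ : n.+1 + 4 = n + 5) //; lia.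
rewrite (_ : n.+1 + 5 = (n+4)+2); last by lia.
by rewrite C_rec ?IH1 -?Q_rec //; lia.
Qed.


Definition sgf (k1 k2 k3 n : nat) : bool :=
  [|| n %% 4 == 0, (n %% 4 == 1) && (k1 <= n %/ 4),
      (n %% 4 == 2) && (k2 <= n %/ 4) | (n %% 4 == 3) && (k3 <= n %/ 4)].

Definition kunz k1 k2 k3 :=
  [/\ k2 <= 2*k1, k3 <= k1 + k2, k2 <= 2*k3+1 & k1 <= k2+k3+1].

Lemma sgf0 k1 k2 k3 q : sgf k1 k2 k3 (4*q) = true.
Proof. rewrite /sgf; lia. Qed.
Lemma sgf1 k1 k2 k3 q : sgf k1 k2 k3 (4*q+1) = (k1 <= q).
Proof. rewrite /sgf; apply/idP/idP => H; lia. Qed.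
Lemma sgf2 k1 k2 k3 q : sgf k1 k2 k3 (4*q+2) = (k2 <= q).
Proof. rewrite /sgf; apply/idP/idP => H; lia. Qed.
Lemma sgf3 k1 k2 k3 q : sgf k1 k2 k3 (4*q+3) = (k3 <= q).
Proof. rewrite /sgf; apply/idP/idP => H; lia. Qed.

Lemma sgf_add k1 k2 k3 a b : kunz k1 k2 k3 ->
  sgf k1 k2 k3 a -> sgf k1 k2 k3 b -> sgf k1 k2 k3 (a + b).
Proof. case=> K1 K2 K3 K4; rewrite /sgf => Ha Hb; lia. Qed.

Definition gl k1 k2 k3 : seq nat :=
  [seq 4*i+1 | i <- iota 0 k1] ++ [seq 4*i+2 | i <- iota 0 k2] ++
  [seq 4*i+3 | i <- iota 0 k3].

Lemma decomp n : exists q r, r < 4 /\ n = 4*q + r.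
Proof. exists (n %/ 4), (n %% 4); split; [exact: ltn_pmod | lia]. Qed.

Lemma gl_mem k1 k2 k3 n : (n \in gl k1 k2 k3) = ~~ sgf k1 k2 k3 n.
Proof.
rewrite /gl !mem_cat; apply/idP/idP.
  case/orP => [|/orP []] /mapP [i]; rewrite mem_iota => /andP [_ Hi] ->;
  rewrite /sgf; lia.
have [q [r [Hr ->]]] := decomp n.
case: r Hr => [|[|[|[|r]]]] // _.
- by rewrite addn0 sgf0.
- rewrite sgf1 -ltnNge => H; apply/orP; left; apply/mapP; exists q => //.
  by rewrite mem_iota.
- rewrite sgf2 -ltnNge => H; apply/orP; right; apply/orP; left; apply/mapP; exists q => //.
  by rewrite mem_iota.
- rewrite sgf3 -ltnNge => H; apply/orP; right; apply/orP; right; apply/mapP; exists q => //.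
  by rewrite mem_iota.
Qed.

Lemma gl_uniq k1 k2 k3 : uniq (gl k1 k2 k3).
Proof.
have U : forall c k, uniq [seq 4*i+c | i <- iota 0 k].
  by move=> c k; rewrite map_inj_uniq ?iota_uniq // => i j /eqP; lia.
rewrite /gl cat_uniq cat_uniq !U /=; apply/andP; split.
  apply/hasPn => n; rewrite mem_cat => /orP [] /mapP [j _ ->];
  apply/negP => /mapP [i _ /eqP]; lia.
rewrite andbT; apply/hasPn => n /mapP [j _ ->]; apply/negP => /mapP [i _ /eqP]; lia.
Qed.

Lemma gl_size k1 k2 k3 : size (gl k1 k2 k3) = k1 + k2 + k3.
Proof. by rewrite /gl !size_cat !size_map !size_iota addnA. Qed.


Lemma sgf_S4g k1 k2 k3 : kunz k1 k2 k3 -> 0 < k1 -> 0 < k2 -> 0 < k3 ->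
  S4g (k1 + k2 + k3) (sgf k1 k2 k3).
Proof.
move=> K H1 H2 H3; split.
- split; first by rewrite /sgf.
    by move=> a b; apply: sgf_add K.
  exists (4 * (k1 + k2 + k3 + 1)) => n Hn; rewrite /sgf; lia.
- split => //.
  move=> k Hk; rewrite /sgf; lia.
- exists (gl k1 k2 k3); split; [exact: gl_uniq | exact: gl_mem | exact: gl_size].
Qed.

Lemma S4g_coord S r : numerical_semigroup S -> S 4 ->
  exists k, forall q, S (4*q + r) = (k <= q).
Proof.
case=> S0 Sadd [N HN] S4.
have S4m : forall m, S (4 * m).
  elim=> [|m IH]; first by rewrite muln0.
  by rewrite mulnS addnC; apply: Sadd.
have ex : exists q, S (4*q + r) by exists N; apply: HN; lia.
case: (ex_minnP ex) => k Hk Hmin.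
exists k => q; apply/idP/idP; first exact: Hmin.
move=> Hq; rewrite (_ : 4*q + r = 4*k + r + 4*(q-k)); last by lia.
exact: Sadd.
Qed.

Lemma S4g_kunz g S : S4g g S -> exists k1 k2 k3,
  [/\ kunz k1 k2 k3, [&& 0 < k1, 0 < k2 & 0 < k3], g = k1 + k2 + k3 & S =1 sgf k1 k2 k3].
Proof.
case=> HS [_ S4 Sm] [s [Us Ms Ss]].
have Sadd : forall a b, S a -> S b -> S (a + b) by case: HS.
have [k1 E1] := S4g_coord S 1 HS S4.
have [k2 E2] := S4g_coord S 2 HS S4.
have [k3 E3] := S4g_coord S 3 HS S4.
have [k0 E0] := S4g_coord S 0 HS S4.
have S0 : S 0 by case: HS.
have Hk0 : k0 = 0 by move: (E0 0); rewrite S0; lia.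
have eqS : S =1 sgf k1 k2 k3.
  move=> n; have [q [r [Hr ->]]] := decomp n.
  case: r Hr => [|[|[|[|r]]]] // _.
  - by rewrite addn0 sgf0 -(addn0 (4*q)) E0 Hk0.
  - by rewrite sgf1 E1.
  - by rewrite sgf2 E2.
  - by rewrite sgf3 E3.
have P1 : 0 < k1.
  by move: (E1 0) (Sm 1 isT); rewrite muln0 add0n; case: (S 1) => //=; lia.
have P2 : 0 < k2.
  by move: (E2 0) (Sm 2 isT); rewrite muln0 add0n; case: (S 2) => //=; lia.
have P3 : 0 < k3.
  by move: (E3 0) (Sm 3 isT); rewrite muln0 add0n; case: (S 3) => //=; lia.
have M1 : S (4*k1+1) by rewrite E1.
have M2 : S (4*k2+2) by rewrite E2.
have M3 : S (4*k3+3) by rewrite E3.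
have Ka : k2 <= 2*k1.
  have := Sadd _ _ M1 M1.
  by rewrite (_ : 4*k1+1 + (4*k1+1) = 4*(2*k1)+2) ?E2 //; lia.
have Kb : k3 <= k1 + k2.
  have := Sadd _ _ M1 M2.
  by rewrite (_ : 4*k1+1 + (4*k2+2) = 4*(k1+k2)+3) ?E3 //; lia.
have Kc : k2 <= 2*k3+1.
  have := Sadd _ _ M3 M3.
  by rewrite (_ : 4*k3+3 + (4*k3+3) = 4*(2*k3+1)+2) ?E2 //; lia.
have Kd : k1 <= k2+k3+1.
  have := Sadd _ _ M2 M3.
  by rewrite (_ : 4*k2+2 + (4*k3+3) = 4*(k2+k3+1)+1) ?E1 //; lia.
exists k1, k2, k3; split => //; first by rewrite P1 P2 P3.
rewrite -Ss -(gl_size k1 k2 k3); apply: perm_size; apply: uniq_perm => //.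
  exact: gl_uniq.
by move=> n; rewrite Ms gl_mem eqS.
Qed.


Definition T g : seq (nat * nat) :=
  [seq p <- [seq (x, y) | y <- iota 0 g.+1, x <- iota 0 g.+1] | valid g p.1 p.2].

Lemma T_uniq g : uniq (T g).
Proof.
rewrite filter_uniq // allpairs_uniq ?iota_uniq //.
by move=> [y1 x1] [y2 x2] _ _ [-> ->].
Qed.

Lemma mem_T g x y : ((x, y) \in T g) = valid g x y.
Proof.
rewrite mem_filter; case V: (valid g x y); last by [].
rewrite andTb; apply/allpairsP; exists (y, x); rewrite !mem_iota; split => //=; move: V; rewrite /valid; lia.
Qed.

Lemma size_T g : size (T g) = C g.
Proof.
rewrite size_filter /C count_flatten -map_comp.
rewrite sumnE big_map -(big_mkord xpredT (fun y => cnt g y)) /index_iota subn0.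
by apply: eq_bigr => y _; rewrite /= count_map.
Qed.

Definition sgp g (p : nat * nat) := sgf p.1 p.2 (g - p.1 - p.2).

Lemma sgp_inj g x y x' y' : valid g x y -> valid g x' y' ->
  sgp g (x, y) =1 sgp g (x', y') -> (x, y) = (x', y').
Proof.
move=> V V' E.
have e1 := E (4*x+1); have e1' := E (4*x'+1).
have e2 := E (4*y+2); have e2' := E (4*y'+2).
rewrite /sgp /= !sgf1 !sgf2 in e1 e1' e2 e2'.
have -> : x = x' by lia.
have -> : y = y' by lia.
by [].
Qed.

Lemma card_T g : has_card (S4g g) (size (T g)).
Proof.
exists (fun i => sgp g (nth (0,0) (T g) i)); split.
- move=> i; have := mem_nth (0,0) (ltn_ord i).
  case: (nth (0,0) (T g) i) => x y; rewrite mem_T => V; rewrite /sgp /=.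
  have Hg : g = x + y + (g - x - y) by move: V; rewrite /valid; lia.
  rewrite {1}Hg; apply: sgf_S4g; move: V; rewrite /valid /kunz => V; try split; lia.
- move=> i j E; apply: ord_inj; simpl in E.
  have Hi := mem_nth (0,0) (ltn_ord i); have Hj := mem_nth (0,0) (ltn_ord j).
  have : nth (0,0) (T g) i = nth (0,0) (T g) j.
    move: E Hi Hj; case: (nth (0,0) (T g) i) => x y; case: (nth (0,0) (T g) j) => x0 y0.
    rewrite !mem_T => E V V2. exact: (@sgp_inj g x y x0 y0 V V2 E).
  by move/eqP; rewrite nth_uniq ?T_uniq // => /eqP.
- move=> S HS; have [k1 [k2 [k3 [K P Eg ES]]]] := S4g_kunz g S HS.
  have V : valid g k1 k2 by case: K => *; move: P; rewrite /valid Eg; lia.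
  have Hin : (k1, k2) \in T g by rewrite mem_T.
  have Hidx : index (k1, k2) (T g) < size (T g) by rewrite index_mem.
  exists (Ordinal Hidx) => n /=; rewrite nth_index // /sgp /= ES.
  by rewrite (_ : g - k1 - k2 = k3) //; lia.
Qed.

Local Open Scope ring_scope.

Lemma floor_nat (n d : nat) : (0 < d)%N ->
  Num.floor ((n%:R : rat) / d%:R) = (n %/ d)%:Z.
Proof.
move=> Hd; apply: floor_def.
have Hd' : (0 : rat) < d%:R by rewrite ltr0n.
have -> : ((n %/ d)%:Z + 1 = (n %/ d + 1)%N%:Z) by rewrite PoszD.
rewrite -!pmulrn.
rewrite ler_pdivlMr // ltr_pdivrMr // -!natrM ler_nat ltr_nat.
have := divn_eq n d; have := ltn_pmod n Hd; nia.
Qed.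

Lemma ceil_nat (n d : nat) : (0 < d)%N -> (0 < n)%N ->
  Num.ceil ((n%:R : rat) / d%:R) = ((n + d - 1) %/ d)%:Z.
Proof.
move=> Hd Hn; apply: ceil_def.
have Hd' : (0 : rat) < d%:R by rewrite ltr0n.
have Hm : (0 < (n + d - 1) %/ d)%N.
  by rewrite divn_gt0 //; lia.
have -> : ((n + d - 1) %/ d)%:Z - 1 = (((n + d - 1) %/ d).-1)%N%:Z.
  by rewrite -subn1 -subzn.
rewrite -!pmulrn.
rewrite ltr_pdivlMr // ler_pdivrMr // -!natrM ler_nat ltr_nat.
have := divn_eq (n + d - 1) d; have := ltn_pmod (n + d - 1) Hd; nia.
Qed.


Ltac evaldiv := repeat match goal with |- context [ (?a %/ ?b)%N ] =>
  let v := eval vm_compute in (a %/ b)%N in change (a %/ b)%N with v end.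

Lemma formula_eq (g : nat) : (4 <= g)%N ->
    let G : rat := g%:R in
    let fl (x : rat) : rat := (Num.floor x)%:~R in
    let cl (x : rat) : rat := (Num.ceil x)%:~R in
    let a := fl (G / 4) in
    let b := fl (G / 2) in
    let c := fl ((G + 5) / 6) in
    let d := fl ((G + 2) / 6) in
    let e := fl ((G + 2) / 4) in
    let h := fl ((G + 1) / 2) in
    let u := cl ((2 * G - 3) / 8) in
    let v := cl ((2 * G - 7) / 8) in
    (((g*g+6*g)%/12)%N%:R : rat) =
      - G + 5/2 * a + b + 1/2 * c + G * c - c * b - 3/2 * c ^+ 2
      - G * a + 3/2 * a ^+ 2 + a * b - 1/2 * d + d * b - 3/2 * d ^+ 2
      + 1/2 * e + 3/2 * e ^+ 2 - e * b + h * b - h * u + h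
      - v * b + v * u - v.
Proof.
move=> Hg G fl cl a b c d e h u v.
have Ea : a = (g %/ 4)%:R by rewrite /a /fl /G floor_nat // pmulrn.
have Eb : b = (g %/ 2)%:R by rewrite /b /fl /G floor_nat // pmulrn.
have Ec : c = ((g+5) %/ 6)%:R by rewrite /c /fl /G -natrD floor_nat // pmulrn.
have Ed : d = ((g+2) %/ 6)%:R by rewrite /d /fl /G -natrD floor_nat // pmulrn.
have Ee : e = ((g+2) %/ 4)%:R by rewrite /e /fl /G -natrD floor_nat // pmulrn.
have Eh : h = ((g+1) %/ 2)%:R by rewrite /h /fl /G natr1 floor_nat // pmulrn addn1.
have Eu : u = ((2*g-3+8-1) %/ 8)%:R.
  rewrite /u /cl /G -natrM -natrB; last by lia.
  by rewrite ceil_nat // ?pmulrn //; lia.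
have Ev : v = ((2*g-7+8-1) %/ 8)%:R.
  rewrite /v /cl /G -natrM -natrB; last by lia.
  by rewrite ceil_nat // ?pmulrn //; lia.
rewrite Ea Eb Ec Ed Ee Eh Eu Ev /G {Ea Eb Ec Ed Ee Eh Eu Ev a b c d e h u v G fl cl}.
set q := (g %/ 24)%N.
set r := (g %% 24)%N.
have Hr : (r < 24)%N by rewrite /r ltn_pmod.
have Eg : g = (24 * q + r)%N by rewrite /q /r; lia.
have -> : ((g*g+6*g)%/12 = 48*q*q + 4*q*r + 12*q + (r*r+6*r)%/12)%N.
  rewrite Eg; nia.
have -> : (g %/ 4 = 6*q + r %/ 4)%N by lia.
have -> : (g %/ 2 = 12*q + r %/ 2)%N by lia.
have -> : ((g+5) %/ 6 = 4*q + (r+5) %/ 6)%N by lia.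
have -> : ((g+2) %/ 6 = 4*q + (r+2) %/ 6)%N by lia.
have -> : ((g+2) %/ 4 = 6*q + (r+2) %/ 4)%N by lia.
have -> : ((g+1) %/ 2 = 12*q + (r+1) %/ 2)%N by lia.
have -> : ((2*g-3+8-1) %/ 8 = 6*q + (2*r+4) %/ 8)%N by lia.
have -> : ((2*g-7+8-1) %/ 8 = 6*q + (2*r) %/ 8)%N by lia.
rewrite Eg; clearbody r; clear Eg Hg.
do 24 (case: r Hr => [|r] Hr; [evaldiv; rewrite ?(natrD, natrM); field; by []|]).
by [].
Qed.


Theorem mainTheorem9 (g : nat) (hg : (3 <= g)%N) :
  (g = 3%N -> has_card (S4g g) 1) /\
  ((4 <= g)%N -> exists N : nat, has_card (S4g g) N /\
    let G : rat := g%:R in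
    let fl (x : rat) : rat := (Num.floor x)%:~R in
    let cl (x : rat) : rat := (Num.ceil x)%:~R in
    let a := fl (G / 4) in
    let b := fl (G / 2) in
    let c := fl ((G + 5) / 6) in
    let d := fl ((G + 2) / 6) in
    let e := fl ((G + 2) / 4) in
    let h := fl ((G + 1) / 2) in
    let u := cl ((2 * G - 3) / 8) in
    let v := cl ((2 * G - 7) / 8) in
    (N%:R : rat) =
      - G + 5/2 * a + b + 1/2 * c + G * c - c * b - 3/2 * c ^+ 2
      - G * a + 3/2 * a ^+ 2 + a * b - 1/2 * d + d * b - 3/2 * d ^+ 2
      + 1/2 * e + 3/2 * e ^+ 2 - e * b + h * b - h * u + h
      - v * b + v * u - v).
Proof.
split.
  by move=> ->; have := card_T 3; rewrite size_T C3.
move=> Hg; exists (size (T g)); split; first exact: card_T.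
rewrite size_T C_closed //; exact: formula_eq.
Qed.
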